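(* Let $N\ge1$ and $1\le m\le N$ be integers and let $D_{N,m}=|D_{N,m}\rangle\langle D_{N,m}|$. Then $C_S(D_{N,m})\ge N-2m+1$.
   Context: The Dicke state is $|D_{N,m}\rangle=\binom{N}{m}^{-1/2}\sum_\pi|0\rangle^{\otimes(N-m)}|1\rangle^{\otimes m}$, the normalized uniform superposition of all $N$-bit computational basis states of Hamming weight $m$. $\mathbb{I},\sigma_X,\sigma_Y,\sigma_Z$ are the identity and Pauli matrices. The notation $\sum_\pi \mathbb{I}^{\otimes j}\otimes A^{\otimes (N-j)}$ denotes the sum, over all distinct placements, of tensor products in which exactly $j$ of the $N$ factors are $\mathbb{I}$ and the other $N-j$ are $A$ (each distinct arrangement counted once). Measurement complexity: for an $N$-qubit permutation-invariant operator $\rho$, $C_S(\rho)$ is the minimal $n_A$ such that there exist real $b_i,c_i,d_i$ and real $\alpha_{ij}$ ($1\le i\le n_A$, $0\le j\le N$) with $\rho=\sum_{i=1}^{n_A}\sum_{j=0}^{N}\alpha_{ij}\sum_\pi\mathbb{I}^{\otimes j}\otimes A_i^{\otimes(N-j)}$, $A_i=b_i\sigma_X+c_i\sigma_Y+d_i\sigma_Z$. *)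

(* Defs.v *)
(* N-qubit operators are represented by their matrix entries
   in the computational basis, indexed by bit strings x : {ffun 'I_N -> 'I_2}. *)
From HB Require Import structures.
From mathcomp Require Import all_boot all_order all_algebra all_field.
Unset Printing Implicit Defensive.
Import Order.TTheory GRing.Theory Num.Theory.
Local Open Scope ring_scope.

Definition basis (N : nat) := {ffun 'I_N -> 'I_2}.

Definition qop (N : nat) := basis N -> basis N -> algC.

Definition sigmaX : 'M[algC]_2 := \matrix_(i < 2, j < 2) (if i != j then 1 else 0).
Definition sigmaY : 'M[algC]_2 :=
  \matrix_(i < 2, j < 2)
    (if (val i == 0%N) && (val j == 1%N) then - 'i
     else if (val i == 1%N) && (val j == 0%N) then 'i else 0).
Definition sigmaZ : 'M[algC]_2 :=
  \matrix_(i < 2, j < 2) (if i == j then (if val i == 0%N then 1 else -1) else 0).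

Definition pauli_comb (b c d : algC) : 'M[algC]_2 :=
  b *: sigmaX + c *: sigmaY + d *: sigmaZ.

Definition tensor (N : nat) (A : 'I_N -> 'M[algC]_2) : qop N :=
  fun x y => \prod_(k < N) A k (x k) (y k).

(* sum_pi I^{(x) j} (x) A^{(x) (N-j)} : sum over all placements of j identities *)
Definition sym_sum (N j : nat) (A : 'M[algC]_2) : qop N :=
  fun x y => \sum_(S : {set 'I_N} | #|S| == j)
               tensor N (fun k => if k \in S then 1%:M else A) x y.

Definition hweight {N : nat} (x : basis N) : nat := #|[set k | x k == 1 :> nat]|.

Definition dicke_vec (N m : nat) (x : basis N) : algC :=
  if hweight x == m then (sqrtC ('C(N, m))%:R)^-1 else 0.

Definition dicke_proj (N m : nat) : qop N :=
  fun x y => dicke_vec N m x * (dicke_vec N m y)^*.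

(* Main.v *)
Require Import Defs.
From HB Require Import structures.
From mathcomp Require Import all_boot all_order all_algebra all_field.
From mathcomp Require Import zify ring lra.
Import Order.TTheory GRing.Theory Num.Theory.
Local Open Scope ring_scope.
Definition Dop (N : nat) (a b : algC) (p : {poly algC}) : {poly algC} :=
  (a%:P + b *: 'X) * p^`() - (N%:R * b) *: p.

Lemma Dop_coef N a b p k :
  (Dop N a b p)`_k = a * (p`_k.+1 *+ k.+1) + b * (p`_k *+ k) - N%:R * b * p`_k.
Proof.
rewrite /Dop coefB coefZ mulrDl coefD coefCM -scalerAl coefZ coefXM coef_deriv.
case: k => [|k] /=; first by rewrite !mulr0n mulr0 -mulrA.
by rewrite coef_deriv.
Qed.

Lemma Dop_add N a b p q : Dop N a b (p + q) = Dop N a b p + Dop N a b q.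
Proof. rewrite /Dop derivD mulrDr scalerDr. by rewrite addrACA opprD. Qed.

Lemma Dop_scale N a b c p : Dop N a b (c *: p) = c *: Dop N a b p.
Proof.
rewrite /Dop derivZ scalerBr -scalerAr !scalerA.
by rewrite [c * _]mulrC. Qed.

Lemma Dop_sum (I : Type) (r : seq I) N a b (F : I -> {poly algC}) :
  Dop N a b (\sum_(i <- r) F i) = \sum_(i <- r) Dop N a b (F i).
Proof.
elim: r => [|i r IH]; first by rewrite !big_nil /Dop deriv0 mulr0 scaler0 subr0.
by rewrite !big_cons Dop_add IH.
Qed.

Lemma Dop_pow N a b a' b' :
  Dop N.+1 a b ((a'%:P + b' *: 'X) ^+ N.+1) =
  (N.+1%:R * (a * b' - b * a')) *: (a'%:P + b' *: 'X) ^+ N.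
Proof.
rewrite /Dop deriv_exp derivD derivC derivZ derivX /= exprS.
rewrite add0r alg_polyC -!mul_polyC !(rmorphM, rmorphB) /= polyC_natr.
ring.
Qed.

Lemma key (I : Type) (r : seq I) (N : nat) (la a b : I -> algC) :
  all (fun i => b i != 0) r ->
  (size (\sum_(i <- r) la i *: ((a i)%:P + b i *: 'X) ^+ N)%R <= N.+1 - size r)%N ->
  \sum_(i <- r) la i *: ((a i)%:P + b i *: 'X) ^+ N = 0.
Proof.
elim: r N la => [|i r IH] N la; first by rewrite big_nil.
move=> /= /andP [bi0 Hb] Hs.
set h := \sum_(j <- i :: r) _.
case: N Hs @h => [|N] Hs h.
  by apply/eqP; rewrite -size_poly_eq0 -leqn0; apply: leq_trans Hs _; rewrite /= subSS sub0n.
have Hsz : (size h <= N.+1)%N by apply: leq_trans Hs _; rewrite subSS leq_subr.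
have HD : Dop N.+1 (a i) (b i) h =
   \sum_(j <- r) (la j * (N.+1%:R * (a i * b j - b i * a j))) *: ((a j)%:P + b j *: 'X) ^+ N.
  rewrite /h Dop_sum big_cons Dop_scale Dop_pow.
  rewrite [b i * a i]mulrC subrr mulr0 scale0r scaler0 add0r.
  by apply: eq_bigr => j _; rewrite Dop_scale Dop_pow scalerA.
have HD0 : Dop N.+1 (a i) (b i) h = 0.
  rewrite HD; apply: IH => //.
  rewrite -HD; apply/leq_sizeP => k Hk.
  rewrite Dop_coef.
  have Hk' : (size h <= k)%N by move: Hs Hk; rewrite -/h /= subSS; lia.
  have z1 := leq_sizeP _ _ Hk'; rewrite (z1 k) // (z1 k.+1) ?leqnS //.
  by rewrite !mul0rn !mulr0 addr0 subr0.
apply/eqP; apply/negPn/negP => hn0.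
have := congr1 (fun p : {poly algC} => p`_(size h).-1) HD0.
rewrite Dop_coef coef0 /=.
have -> : h`_(size h).-1.+1 = 0.
  apply/(leq_sizeP _ _ (leqnn (size h))); by rewrite prednK // lt0n size_poly_eq0.
rewrite mul0rn mulr0 add0r.
move=> /eqP; rewrite subr_eq0 => /eqP.
set d := (size h).-1.
have hd0 : h`_d != 0 by rewrite -lead_coefE lead_coef_eq0.
have ltdN : (d < N.+1)%N by rewrite /d; move: Hsz hn0; rewrite -size_poly_eq0; case: (size h) => //.
move=> E.
have E' : b i * h`_d * d%:R = b i * h`_d * N.+1%:R by rewrite -mulrA mulr_natr E; ring.
move/eqP: E'; rewrite -subr_eq0 -mulrBr !mulf_eq0 (negPf bi0) (negPf hd0) /=.
rewrite subr_eq0 eqr_nat => /eqP; lia.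
Qed.

Definition zeta (u v : 'I_2) : {poly algC} :=
  if u == v then (if val u == 0%N then 1 else -1) else 'X.
Definition zprod N (x y : basis N) : {poly algC} := \prod_(k < N) zeta (x k) (y k).
Arguments zprod {N}.
Definition Lam N (O : qop N) : {poly algC} :=
  \sum_(x : basis N) \sum_(y : basis N) O x y *: zprod x y.
Arguments Lam {N}.
Definition evA (A : 'M[algC]_2) : {poly algC} :=
  \sum_(u : 'I_2) \sum_(v : 'I_2) A u v *: zeta u v.

Lemma sum_ffun2 N (G : 'I_N -> 'I_2 -> 'I_2 -> {poly algC}) :
  \sum_(x : basis N) \sum_(y : basis N) \prod_(k < N) G k (x k) (y k) =
  \prod_(k < N) \sum_(u : 'I_2) \sum_(v : 'I_2) G k u v.
Proof.
rewrite (bigA_distr_bigA (fun k u => \sum_(v : 'I_2) G k u v)) /=.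
apply: eq_bigr => x _.
by rewrite (bigA_distr_bigA (fun k v => G k (x k) v)).
Qed.

Lemma Lam_tensor N (B : 'I_N -> 'M[algC]_2) :
  Lam (tensor N B) = \prod_(k < N) evA (B k).
Proof.
rewrite /Lam /evA -sum_ffun2; apply: eq_bigr => x _; apply: eq_bigr => y _.
rewrite /tensor /zprod -mul_polyC rmorph_prod /= -big_split /=.
by apply: eq_bigr => k _; rewrite mul_polyC.
Qed.

Lemma evA1 : evA 1%:M = 0.
Proof.
rewrite /evA !big_ord_recl !big_ord0 /= !mxE /zeta /=.
by rewrite !addr0 !scale1r !scale0r !addr0 !add0r subrr.
Qed.

Lemma evA_pauli b c d : evA (pauli_comb b c d) = (2*d)%:P + (2*b) *: 'X.
Proof.
rewrite /evA !big_ord_recl !big_ord0 /= /pauli_comb !mxE /zeta /=.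
rewrite alg_polyC -!mul_polyC !(rmorphD, rmorphM, rmorphN, rmorph0, rmorph1) /=.
ring.
Qed.

Lemma prod_if N (S : {set 'I_N}) (e : {poly algC}) :
  \prod_(k < N) (if k \in S then 0 else e) = if #|S| == 0%N then e ^+ N else 0.
Proof.
case: ifP => [/eqP/cards0_eq -> | ].
  by rewrite (eq_bigr (fun _ => e)) ?prodr_const ?card_ord // => k _; rewrite inE.
move/negbT; rewrite cards_eq0 => /set0Pn [k kS].
by rewrite (bigD1 k) //= kS mul0r.
Qed.

Lemma Lam_sym N j A : Lam (sym_sum N j A) = if j == 0%N then evA A ^+ N else 0.
Proof.
have -> : Lam (sym_sum N j A) =
   \sum_(S : {set 'I_N} | #|S| == j) Lam (tensor N (fun k => if k \in S then 1%:M else A)).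
  rewrite /Lam /sym_sum.
  under eq_bigr do under eq_bigr do rewrite scaler_suml.
  under eq_bigr do rewrite exchange_big /=.
  by rewrite exchange_big.
under eq_bigr => S _ do rewrite Lam_tensor.
have H : forall S : {set 'I_N}, \prod_(k < N) evA (if k \in S then 1%:M else A) =
    \prod_(k < N) (if k \in S then 0 else evA A).
  by move=> S; apply: eq_bigr => k _; case: (k \in S); rewrite ?evA1.
under eq_bigr => S _ do rewrite H prod_if.
case: eqP => [-> | /eqP jn0].
  rewrite (eq_bigl (fun S => S == set0)); last by move=> S; rewrite cards_eq0.
  by rewrite big_pred1_eq cards0.
by apply: big1 => S /eqP ->; rewrite (negPf jn0).
Qed.

Definition tc N (x y : basis N) : nat := (\sum_(k < N) (x k != y k))%N.
Definition ec N (x y : basis N) : nat := (\sum_(k < N) ((x k == y k) && (val (x k) == 1%N)))%N.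
Arguments tc {N}. Arguments ec {N}.

Lemma zetaE u v : zeta u v = (-1) ^+ ((u == v) && (val u == 1%N)) * 'X ^+ (u != v).
Proof.
rewrite /zeta.
by case: u => [[|[|?]] ?] //; case: v => [[|[|?]] ?] //=; rewrite ?expr0 ?expr1 ?mulr1 ?mul1r.
Qed.

Lemma zprodE N (x y : basis N) : zprod x y = ((-1) ^+ ec x y)%:P * 'X ^+ tc x y.
Proof.
rewrite /zprod (eq_bigr _ (fun k _ => zetaE (x k) (y k))) big_split /= !prodrXr.
by rewrite rmorphXn rmorphN rmorph1.
Qed.

Lemma hweightE N (x : basis N) : (hweight x = \sum_(k < N) (val (x k) == 1%N))%N.
Proof.
rewrite /hweight -sum1_card big_mkcond /=; apply: eq_bigr => k _; rewrite inE.
by case: (_ == _).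
Qed.

Lemma tc_ec N (x y : basis N) : (tc x y + 2 * ec x y = hweight x + hweight y)%N.
Proof.
rewrite /tc /ec !hweightE big_distrr -!big_split /=; apply: eq_bigr => k _.
by case: (x k) => [[|[|?]] ?] //; case: (y k) => [[|[|?]] ?].
Qed.

Section Dicke.
Variables (N m : nat).
Hypothesis (Hm : (0 < m)%N) (H2m : (2 * m <= N)%N).

Let r : algC := (sqrtC ('C(N, m))%:R)^-1.
Let c : algC := r * r^*.

Lemma c_neq0 : c != 0.
Proof.
have rn0 : r != 0.
  rewrite /r invr_eq0 sqrtC_eq0 pnatr_eq0 -lt0n bin_gt0; lia.
by rewrite /c mulf_neq0 // conjC_eq0.
Qed.

Lemma LamD_coef k : (Lam (dicke_proj N m))`_k =
  c * \sum_(x : basis N) \sum_(y : basis N)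
        (if (hweight x == m) && (hweight y == m) then (zprod x y)`_k else 0).
Proof.
rewrite /Lam coef_sum mulr_sumr; apply: eq_bigr => x _.
rewrite coef_sum mulr_sumr; apply: eq_bigr => y _.
rewrite coefZ /dicke_proj /dicke_vec.
by case: (hweight x == m); case: (hweight y == m); rewrite /= ?mul0r ?conjC0 ?mulr0 ?mul0r.
Qed.

Lemma zcoef_big (x y : basis N) k : hweight x = m -> hweight y = m -> (2 * m < k)%N ->
  (zprod x y)`_k = 0.
Proof.
move=> hx hy hk; rewrite zprodE coefCM coefXn.
have := tc_ec _ x y; rewrite hx hy => E.
have -> : (k == tc x y) = false by apply/negbTE/eqP; lia.
by rewrite mulr0.
Qed.

Lemma zcoef_2m (x y : basis N) : hweight x = m -> hweight y = m ->
  (zprod x y)`_(2 * m) = (tc x y == 2 * m)%N%:R.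
Proof.
move=> hx hy; rewrite zprodE coefCM coefXn.
have := tc_ec _ x y; rewrite hx hy => E.
case: eqP => [Et|Et]; last by rewrite eq_sym; move/eqP/negbTE: Et => ->; rewrite mulr0.
have -> : ec x y = 0%N by lia.
by rewrite Et eqxx expr0 mul1r.
Qed.

Definition one2 : 'I_2 := @Ordinal 2 1 isT.
Definition ind (a b : nat) : basis N :=
  [ffun k : 'I_N => if (a <= k < b)%N then one2 else ord0].

Lemma cnt_ord n a b : (a <= b)%N ->
  (\sum_(k < n) ((a <= k < b)%N : nat) = minn b n - minn a n)%N.
Proof.
move=> ab; elim: n => [|n IH]; first by rewrite big_ord0 !minn0.
rewrite big_ord_recr /= IH.
case: (leqP a n) => an; case: (ltnP n b) => nb /=; lia.
Qed.

Lemma hw_ind a b : (a <= b <= N)%N -> hweight (ind a b) = (b - a)%N.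
Proof.
move=> /andP [ab bN]; rewrite hweightE.
rewrite (eq_bigr (fun k : 'I_N => ((a <= k < b)%N : nat))); last first.
  by move=> k _; rewrite /ind ffunE; case: ifP.
by rewrite cnt_ord //; lia.
Qed.

Lemma ec_ind : ec (ind 0 m) (ind m (2 * m)) = 0%N.
Proof.
rewrite /ec big1 // => k _; rewrite /ind !ffunE.
by case: (ltnP k m) => km /=; rewrite ?andbF.
Qed.

Lemma LamD_2m : (Lam (dicke_proj N m))`_(2 * m) != 0.
Proof.
rewrite LamD_coef mulf_eq0 negb_or c_neq0 /=.
have E : forall x y : basis N,
  (if (hweight x == m) && (hweight y == m) then (zprod x y)`_(2 * m) else 0) =
  (((hweight x == m) && (hweight y == m) && (tc x y == 2 * m)%N) : nat)%:R.
  move=> x y; case: eqP => hx; case: eqP => hy //=.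
  by rewrite zcoef_2m.
under eq_bigr do under eq_bigr do rewrite E.
under eq_bigr do rewrite -natr_sum.
rewrite -natr_sum pnatr_eq0 -lt0n.
have hx : hweight (ind 0 m) = m by rewrite hw_ind ?subn0 //; lia.
have hy : hweight (ind m (2 * m)) = m by rewrite hw_ind; lia.
have ht : tc (ind 0 m) (ind m (2 * m)) = (2 * m)%N.
  have := tc_ec _ (ind 0 m) (ind m (2 * m)); rewrite hx hy ec_ind; lia.
rewrite (bigD1 (ind 0 m)) //= (bigD1 (ind m (2 * m))) //= hx hy ht !eqxx /=.
by rewrite -addnA addnC addn1.
Qed.

Lemma LamD_big k : (2 * m < k)%N -> (Lam (dicke_proj N m))`_k = 0.
Proof.
move=> hk; rewrite LamD_coef big1 ?mulr0 // => x _; rewrite big1 // => y _.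
by case: eqP => hx; case: eqP => hy //=; rewrite zcoef_big.
Qed.

End Dicke.

Lemma Lam_lin N n K (a : 'I_n -> 'I_K -> algC) (O : 'I_n -> 'I_K -> qop N) :
  Lam (fun x y => \sum_(i < n) \sum_(j < K) a i j * O i j x y) =
  \sum_(i < n) \sum_(j < K) a i j *: Lam (O i j).
Proof.
rewrite /Lam /=.
under [RHS]eq_bigr do under eq_bigr do rewrite scaler_sumr.
under [RHS]eq_bigr do under eq_bigr do under eq_bigr do rewrite scaler_sumr.
under [LHS]eq_bigr do under eq_bigr do rewrite scaler_suml.
under [LHS]eq_bigr do under eq_bigr do under eq_bigr do rewrite scaler_suml.
under [LHS]eq_bigr do under eq_bigr do under eq_bigr do under eq_bigr do rewrite -scalerA.
under [LHS]eq_bigr do rewrite exchange_big.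
rewrite exchange_big.
under [LHS]eq_bigr do under eq_bigr do rewrite exchange_big.
by under [LHS]eq_bigr do rewrite exchange_big.
Qed.

Theorem theorem5 (N m : nat) :
  (1 <= N)%N -> (1 <= m <= N)%N ->
  forall (n : nat) (b c d : 'I_n -> algC) (alpha : 'I_n -> 'I_N.+1 -> algC),
    (forall i, b i \is Num.real) ->
    (forall i, c i \is Num.real) ->
    (forall i, d i \is Num.real) ->
    (forall i j, alpha i j \is Num.real) ->
    (forall x y : basis N,
       dicke_proj N m x y =
       \sum_(i < n) \sum_(j < N.+1)
          alpha i j * sym_sum N j (pauli_comb (b i) (c i) (d i)) x y) ->
    (N%:Z - 2 * m%:Z + 1 <= n%:Z)%R.
Proof.
move=> N1 /andP [m1 mN] n b c d alpha _ _ _ _ H.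
case: (ltnP N (n + 2 * m)) => [lt|le]; first by lia.
exfalso.
have m0 : (0 < m)%N by [].
have H2m : (2 * m <= N)%N by lia.
set e := fun i => ((2 * d i)%:P + (2 * b i) *: 'X) : {poly algC}.
have HL : Lam (dicke_proj N m) = \sum_(i < n) alpha i ord0 *: e i ^+ N.
  have -> : Lam (dicke_proj N m) = Lam (fun x y => \sum_(i < n) \sum_(j < N.+1)
          alpha i j * sym_sum N j (pauli_comb (b i) (c i) (d i)) x y).
    by rewrite /Lam; apply: eq_bigr => x _; apply: eq_bigr => y _; rewrite H.
  rewrite Lam_lin; apply: eq_bigr => i _.
  rewrite big_ord_recl Lam_sym eqxx evA_pauli big1 ?addr0 // => j _.
  by rewrite Lam_sym /= scaler0.
pose h := \sum_(i < n | b i != 0) alpha i ord0 *: e i ^+ N.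
have Hh : forall k, (0 < k)%N -> h`_k = (Lam (dicke_proj N m))`_k.
  move=> k k0; rewrite HL (bigID (fun i => b i != 0)) /= coefD.
  suff -> : (\sum_(i < n | ~~ (b i != 0)) alpha i ord0 *: e i ^+ N)`_k = 0 by rewrite addr0.
  rewrite coef_sum big1 // => i /negPn/eqP bi0.
  rewrite /e bi0 mulr0 scale0r addr0 -rmorphXn coefZ coefC.
  by case: k k0 => // k _; rewrite mulr0.
pose r := enum [pred i : 'I_n | b i != 0].
have hr : h = \sum_(i <- r) alpha i ord0 *: ((2 * d i)%:P + (2 * b i) *: 'X) ^+ N.
  by rewrite /r big_enum /h; apply: eq_bigl => i; rewrite inE.
have h0 : h = 0.
  rewrite hr; apply: key.
    apply/allP => i; rewrite mem_enum inE => bi0.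
    by rewrite mulf_neq0 // pnatr_eq0.
  rewrite -hr.
  have sr : (size r <= n)%N by rewrite /r -cardE; apply: leq_trans (max_card _) _; rewrite card_ord.
  have : (size h <= (2 * m).+1)%N.
    apply/leq_sizeP => k hk; rewrite Hh; last by lia.
    by apply: LamD_big => //.
  move=> hs; apply: leq_trans hs _; lia.
have := LamD_2m N m m0 H2m; rewrite -Hh; last by lia.
by rewrite h0 coef0 eqxx.
Qed.
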